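(* Let $N,K,T\ge1$, let $\mathbf{W}\in\mathbb{R}^{N\times K}$ have linearly independent columns $\mathbf{w}_1,\dots,\mathbf{w}_K$, let $\bar{\boldsymbol{\Psi}}_{\mathrm{id}}\in\mathbb{R}^{N\times N}$ and $\bar{\boldsymbol{\Psi}}_{\mathrm{f}}\in\mathbb{R}^{K\times K}$ be diagonal with strictly positive diagonal entries, and let $\alpha_1,\dots,\alpha_T>0$, $\beta_1,\dots,\beta_T>0$ with $\sum_t\alpha_t=\sum_t\beta_t=1$. For $t=1,\dots,T$ set $\boldsymbol{\Psi}_{\mathrm{id},t}=\alpha_t\bar{\boldsymbol{\Psi}}_{\mathrm{id}}$, $\boldsymbol{\Psi}_{\mathrm{f},t}=\beta_t\bar{\boldsymbol{\Psi}}_{\mathrm{f}}$ and $\mathbf{G}_t=\left(\boldsymbol{\Psi}_{\mathrm{id},t}+\mathbf{W}\boldsymbol{\Psi}_{\mathrm{f},t}\mathbf{W}^\top\right)^{-1}$. Let $\mathbf{x}_0\in\mathbb{R}^N$. Then the schedule $$\mathbf{v}_t^*=\alpha_t\mathbf{x}_0+(\beta_t-\alpha_t)\,\mathbf{W}\left(\bar{\boldsymbol{\Psi}}_{\mathrm{f}}^{-1}+\mathbf{W}^\top\bar{\boldsymbol{\Psi}}_{\mathrm{id}}^{-1}\mathbf{W}\right)^{-1}\mathbf{W}^\top\bar{\boldsymbol{\Psi}}_{\mathrm{id}}^{-1}\mathbf{x}_0,\qquad t=1,\dots,T,$$ is optimal for the problem of minimizing $\sum_{t=1}^T\tfrac12\mathbf{v}_t^\top\mathbf{G}_t\mathbf{v}_t$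 subject to $\sum_{t=1}^T\mathbf{v}_t=\mathbf{x}_0$. Equivalently, $\mathbf{v}_t^*=\alpha_t\mathbf{x}_0+(\beta_t-\alpha_t)\sum_{k=1}^K(\widehat{\mathbf{w}}_k^\top\mathbf{x}_0)\,\mathbf{w}_k$, where $\widehat{\mathbf{w}}_k$ is the $k$-th column of $\widehat{\mathbf{W}}=\bar{\boldsymbol{\Psi}}_{\mathrm{id}}^{-1}\mathbf{W}\left(\bar{\boldsymbol{\Psi}}_{\mathrm{f}}^{-1}+\mathbf{W}^\top\bar{\boldsymbol{\Psi}}_{\mathrm{id}}^{-1}\mathbf{W}\right)^{-1}$.
   Context: $\alpha_t$ and $\beta_t$ are the intraday activity profiles of single-stock and index-fund liquidity providers respectively. *)

(* Defs.v *)
From HB Require Import structures.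
From mathcomp Require Import all_boot all_order all_algebra.
Set Implicit Arguments. Unset Strict Implicit. Unset Printing Implicit Defensive.
Import Order.TTheory GRing.Theory Num.Theory.
Local Open Scope ring_scope.

Definition pos_diag_mx (R : realFieldType) (n : nat) (A : 'M[R]_n) : Prop :=
  is_diag_mx A /\ (forall i : 'I_n, 0 < A i i).

Definition half_quad (R : realFieldType) (n : nat) (G : 'M[R]_n) (v : 'cV[R]_n) : R :=
  2^-1 * ((v^T *m G *m v) 0 0).

Definition exec_cost (R : realFieldType) (n T : nat) (G : 'I_T -> 'M[R]_n)
    (v : 'I_T -> 'cV[R]_n) : R :=
  \sum_(t < T) half_quad (G t) (v t).

(* Main.v *)
Require Import Defs.
From HB Require Import structures.
From mathcomp Require Import all_boot all_order all_algebra.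
From mathcomp Require Import ring.
Import Order.TTheory GRing.Theory Num.Theory.
Local Open Scope ring_scope.
Set Implicit Arguments. Unset Strict Implicit.


Definition qf (R : realFieldType) n (A : 'M[R]_n) (u : 'cV[R]_n) : R := (u^T *m A *m u) 0 0.
Definition pd (R : realFieldType) n (A : 'M[R]_n) := A^T = A /\ forall u, u != 0 -> 0 < qf A u.
Definition psd (R : realFieldType) n (A : 'M[R]_n) := A^T = A /\ forall u, 0 <= qf A u.

Lemma pd_psd (R : realFieldType) n (A : 'M[R]_n) : pd A -> psd A.
Proof.
move=> [hs hp]; split => // u; case: (eqVneq u 0) => [->|/hp/ltW //].
by rewrite /qf mulmx0 mxE.
Qed.

Lemma diag_pd (R : realFieldType) n (A : 'M[R]_n) : is_diag_mx A -> (forall i, 0 < A i i) -> pd A.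
Proof.
move=> /diag_mxP [d ->] hp; split; first by rewrite tr_diag_mx.
move=> u hu; rewrite /qf mul_mx_diag mxE.
have hd : forall i, 0 < d 0 i by move=> i; have := hp i; rewrite mxE eqxx mulr1n.
have [i hi] : exists i, u i 0 != 0.
  apply/existsP; apply: contraNT hu => /existsPn h; apply/eqP/matrixP => i j.
  by rewrite (ord1 j) mxE; apply/eqP; have := h i; rewrite negbK.
rewrite (bigD1 i) //= !mxE ltr_pwDl //.
  by rewrite mulrAC -expr2 mulr_gt0 // lt_def sqrf_eq0 hi sqr_ge0.
apply: sumr_ge0 => j _; rewrite !mxE mulrAC -expr2 mulr_ge0 ?sqr_ge0 //.
exact: ltW.
Qed.

Lemma pd_unit (R : realFieldType) n (A : 'M[R]_n) : pd A -> A \in unitmx.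
Proof.
move=> [hs hp]; rewrite -row_free_unit -kermx_eq0; apply: contraT => hk.
have [i hi] : exists i, row i (kermx A) != 0.
  apply/existsP; apply: contraNT hk => /existsPn h; apply/eqP/row_matrixP => i.
  by rewrite row0; apply/eqP; have := h i; rewrite negbK.
have := hp (row i (kermx A))^T; rewrite trmx_eq0 => /(_ hi).
by rewrite /qf trmxK -row_mul mulmx_ker row0 mul0mx mxE ltxx.
Qed.

Lemma pd_inv (R : realFieldType) n (A : 'M[R]_n) : pd A -> pd (invmx A).
Proof.
move=> hA; have hu := pd_unit hA; case: hA => hs hp; split.
  by rewrite trmx_inv hs.
move=> u hu0; set y := invmx A *m u.
have hy : y != 0 by apply: contraNneq hu0 => hy; rewrite -(mulKVmx hu u) -/y hy mulmx0.
have := hp y hy; rewrite /qf /y trmx_mul trmx_inv hs -!mulmxA (mulmxA A) mulmxV //.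
by rewrite mul1mx.
Qed.

Lemma pd_add (R : realFieldType) n (A B : 'M[R]_n) : pd A -> psd B -> pd (A + B).
Proof.
move=> [ha pa] [hb pb]; split; first by rewrite linearD /= ha hb.
move=> u hu; rewrite /qf mulmxDr mulmxDl mxE ltr_wpDr //; [exact: pb | exact: pa].
Qed.

Lemma pd_scale (R : realFieldType) n (a : R) (A : 'M[R]_n) : 0 < a -> pd A -> pd (a *: A).
Proof.
move=> ha [hs hp]; split; first by rewrite linearZ /= hs.
move=> u hu; rewrite /qf -scalemxAr -scalemxAl mxE mulr_gt0 //; exact: hp.
Qed.

Lemma psd_scale (R : realFieldType) n (a : R) (A : 'M[R]_n) : 0 <= a -> psd A -> psd (a *: A).
Proof.
move=> ha [hs hp]; split; first by rewrite linearZ /= hs.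
move=> u; rewrite /qf -scalemxAr -scalemxAl mxE mulr_ge0 //; exact: hp.
Qed.

Lemma psd_conj (R : realFieldType) n m (A : 'M[R]_n) (W : 'M[R]_(m, n)) : psd A -> psd (W *m A *m W^T).
Proof.
move=> [hs hp]; split; first by rewrite !trmx_mul trmxK hs mulmxA.
move=> u; have := hp (W^T *m u); rewrite /qf trmx_mul trmxK !mulmxA //.
Qed.

Unset Implicit Arguments. Set Strict Implicit.

Theorem proposition4 (R : realFieldType) (N K T : nat)
  (hN : (1 <= N)%N) (hK : (1 <= K)%N) (hT : (1 <= T)%N)
  (W : 'M[R]_(N, K)) (hW : \rank W = K)
  (Psi_id : 'M[R]_N) (Psi_f : 'M[R]_K)
  (hPid : pos_diag_mx Psi_id) (hPf : pos_diag_mx Psi_f)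
  (alpha beta : 'I_T -> R)
  (halpha : forall t, 0 < alpha t) (hbeta : forall t, 0 < beta t)
  (hsa : \sum_(t < T) alpha t = 1) (hsb : \sum_(t < T) beta t = 1)
  (x0 : 'cV[R]_N) :
  let G := fun t : 'I_T =>
    invmx (alpha t *: Psi_id + W *m (beta t *: Psi_f) *m W^T) in
  let M := invmx (invmx Psi_f + W^T *m invmx Psi_id *m W) in
  let vstar := fun t : 'I_T =>
    alpha t *: x0 + (beta t - alpha t) *: (W *m M *m W^T *m invmx Psi_id *m x0) in
  let What := invmx Psi_id *m W *m M in
  (\sum_(t < T) vstar t = x0 /\
   forall v : 'I_T -> 'cV[R]_N, \sum_(t < T) v t = x0 ->
     exec_cost G vstar <= exec_cost G v) /\
  (forall t : 'I_T, vstar t =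
     alpha t *: x0 + (beta t - alpha t) *:
       \sum_(k < K) (((col k What)^T *m x0) 0 0) *: col k W).
Proof.
move=> G M vstar What.
have pdA : pd Psi_id by case: hPid => ? ?; exact: diag_pd.
have pdB : pd Psi_f by case: hPf => ? ?; exact: diag_pd.
set P := invmx Psi_id.
have pdP : pd P := pd_inv pdA.
set Mi := invmx Psi_f + W^T *m P *m W.
have pdMi : pd Mi.
  apply: pd_add; first exact: pd_inv.
  have := psd_conj W^T (pd_psd pdP); by rewrite trmxK.
have pdM : pd M := pd_inv pdMi.
set C := fun t => alpha t *: Psi_id + W *m (beta t *: Psi_f) *m W^T.
have pdC : forall t, pd (C t).
  move=> t; apply: pd_add; first exact: pd_scale.
  apply: psd_conj; apply: psd_scale; [exact: ltW | exact: pd_psd].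
set lam := (P - P *m W *m M *m W^T *m P) *m x0.
have hWT : W^T *m P *m W = Mi - invmx Psi_f by rewrite /Mi addrC addKr.
have uA := pd_unit pdA.
have uB := pd_unit pdB.
have uMi := pd_unit pdMi.
have hW1 : W^T *m (P - P *m W *m M *m W^T *m P) = invmx Psi_f *m M *m W^T *m P.
  rewrite mulmxBr !mulmxA hWT !mulmxBl /M -/P -/Mi mulmxV // mul1mx.
  by rewrite opprB addrC subrK.
have hkey : Psi_f *m (W^T *m lam) = M *m W^T *m P *m x0.
  by rewrite /lam (mulmxA W^T) hW1 !mulmxA mulmxV // mul1mx.
have hAl : Psi_id *m lam = x0 - W *m M *m W^T *m P *m x0.
  rewrite /lam mulmxA mulmxBr !mulmxA /P mulmxV // !mul1mx mulmxBl mul1mx.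
  by [].
clearbody lam.
have hv : forall t, vstar t = C t *m lam.
  move=> t; rewrite /C mulmxDl -scalemxAr -!mulmxA -!scalemxAl -mulmxA hkey hAl.
  rewrite /vstar -/P !mulmxA.
  set Y := W *m M *m W^T *m P *m x0.
  by rewrite scalerBl scalerBr addrA addrAC.
have hGv : forall t, G t *m vstar t = lam.
  move=> t; rewrite hv /G mulKmx //; exact: (pd_unit (pdC t)).
have hGs : forall t, (G t)^T = G t by move=> t; case: (pd_inv (pdC t)).
have tr00 : forall B : 'M[R]_1, B 0 0 = B^T 0 0 by move=> B; rewrite mxE.
have hsum : \sum_(t < T) vstar t = x0.
  rewrite /vstar big_split /= -!scaler_suml sumrB hsa hsb subrr scale0r.
  by rewrite addr0 scale1r.
split; [split => //|].
- move=> v hv0.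
  have heq : forall t, half_quad (G t) (v t) = half_quad (G t) (vstar t)
      + ((v t - vstar t)^T *m lam) 0 0 + half_quad (G t) (v t - vstar t).
    move=> t; have ha := hGv t; move: (vstar t) ha => a ha.
    rewrite -[v t](subrK a); move: (v t - a) => d; rewrite addrK.
    have hy : d^T *m G t *m a = d^T *m lam by rewrite -mulmxA ha.
    have hx : a^T *m G t *m d = d^T *m lam.
      rewrite -hy; apply/matrixP => i j; rewrite (ord1 i) (ord1 j) tr00.
      by rewrite !trmx_mul trmxK hGs mulmxA.
    rewrite /half_quad !linearD /= !mulmxDl hx hy.
    move: (d^T *m lam) (a^T *m G t *m a) (d^T *m G t *m d) => p q r.
    rewrite !mxE.
    by field.
  rewrite /exec_cost (eq_bigr _ (fun t _ => heq t)) !big_split /=.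
  have -> : \sum_(t < T) ((v t - vstar t)^T *m lam) 0 0 = 0.
    rewrite -summxE -mulmx_suml -linear_sum /= sumrB hv0.
    by rewrite hsum subrr linear0 mul0mx mxE.
  rewrite addr0 lerDl; apply: sumr_ge0 => t _.
  rewrite /half_quad mulr_ge0 // ?invr_ge0 ?ler0n //.
  by case: (pd_psd (pd_inv (pdC t))) => _; apply.
- move=> t; rewrite /vstar; congr (_ + _ *: _).
  have hMs : M^T = M by case: pdM.
  have hPs : P^T = P by case: pdP.
  have hc : forall k, ((col k What)^T *m x0) 0 0 = (M *m (W^T *m (P *m x0))) k 0.
    move=> k; rewrite tr_col -row_mul mxE /What -/P !trmx_mul hMs hPs.
    by rewrite !mulmxA.
  rewrite -/P -!mulmxA; apply/matrixP => i j; rewrite (ord1 j) summxE.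
  rewrite [LHS]mxE; apply: eq_bigr => k _; rewrite hc.
  by rewrite [RHS]mxE mulrC; congr (_ * _); rewrite mxE.
Qed.
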